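(* Let $k_E/k_F$ be an extension of finite fields, $\psi$ a nontrivial additive character of $k_F$, and $n,m\ge0$ integers. Let $a,b\in k_F^\times$ and $c\in\mathbb{C}^\times$. If $\mathrm{Kl}^{n,m}_{ta}(\psi;k_E/k_F)=c\cdot\mathrm{Kl}^{n,m}_{tb}(\psi;k_E/k_F)$ for every $t\in k_F^\times$, then $c=1$ and $a=b$.
   Context: $\mathrm{Nr},\mathrm{Tr}$ are the norm and trace of $k_E/k_F$. For $a\in k_F^\times$, $\mathrm{Kl}^{n,m}_a(\psi;k_E/k_F)=\sum\psi\circ\mathrm{Tr}(t_1+\cdots+t_n)\cdot\psi(s_1+\cdots+s_m)$, the sum over $t_1,\ldots,t_n\in k_E$ and $s_1,\ldots,s_m\in k_F$ with $\mathrm{Nr}(t_1)\cdots\mathrm{Nr}(t_n)s_1\cdots s_m=a$. *)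

(* Defs.v *)
From HB Require Import structures.
From mathcomp Require Import all_boot all_order all_algebra all_field.
Set Implicit Arguments. Unset Strict Implicit. Unset Printing Implicit Defensive.
Import Order.TTheory GRing.Theory Num.Theory.
Local Open Scope ring_scope.

(* A finite field extension k_E/k_F is given by finite fields F, E and a
   (necessarily injective) field embedding iota : F -> E. *)
Section KlDefs.
Variables (F E : finFieldType) (iota : {rmorphism F -> E}).

(* degree [k_E : k_F]: #|k_E| = #|k_F| ^ deg *)
Definition ext_deg : nat := trunc_log #|F| #|E|.

(* trace and norm inside E, as sum / product of the Galois conjugates
   x^(q^i), 0 <= i < [k_E:k_F], q = #|k_F| (Gal(k_E/k_F) generated by Frobenius) *)
Definition trE (x : E) : E := \sum_(i < ext_deg) x ^+ (#|F| ^ i).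
Definition nrE (x : E) : E := \prod_(i < ext_deg) x ^+ (#|F| ^ i).

Definition lowerF (y : E) : F := odflt 0 [pick x : F | iota x == y].

Definition Tr (x : E) : F := lowerF (trE x).
Definition Nr (x : E) : F := lowerF (nrE x).

Definition add_char (C : numClosedFieldType) (psi : F -> C) : Prop :=
  (forall x y, psi (x + y) = psi x * psi y) /\ (forall x, psi x != 0).
Definition nontrivial_char (C : numClosedFieldType) (psi : F -> C) : Prop :=
  exists x, psi x != 1.

Definition Kl (C : numClosedFieldType) (n m : nat) (psi : F -> C) (a : F) : C :=
  \sum_(t : {ffun 'I_n -> E})
   \sum_(s : {ffun 'I_m -> F} |
          (\prod_(i < n) Nr (t i)) * (\prod_(j < m) s j) == a)
     psi (Tr (\sum_(i < n) t i)) * psi (\sum_(j < m) s j).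
End KlDefs.

(* Main.v *)
Require Import Defs.
From HB Require Import structures.
From mathcomp Require Import all_boot all_order all_algebra all_field.
From mathcomp Require Import ring zify.
Import Order.TTheory GRing.Theory Num.Theory.
Local Open Scope ring_scope.

Set Implicit Arguments. Unset Strict Implicit. Unset Printing Implicit Defensive.

Section Conv.
Variables (F : finFieldType) (C : numClosedFieldType).
Implicit Types (f g h : F -> C).

Definition conv f g (z : F) : C := \sum_x \sum_y ((x * y == z)%:R * (f x * g y)).
Definition eqnz f g := forall z, z != 0 -> f z = g z.

Lemma sum_pick (G : F -> C) (c : F) : \sum_y ((y == c)%:R * G y) = G c.
Proof.
rewrite (bigD1 c) //= eqxx mul1r big1 ?addr0 // => y /negbTE ->; by rewrite mul0r.
Qed.

Lemma sum_pick' (G : F -> C) (c : F) : \sum_y ((c == y)%:R * G y) = G c.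
Proof. by rewrite -(sum_pick G); apply: eq_bigr => y _; rewrite eq_sym. Qed.

Lemma sum_mul_eq (G : F -> C) (t v : F) : t != 0 ->
  \sum_u ((t * u == v)%:R * G u) = G (t^-1 * v).
Proof.
move=> t0; rewrite -(sum_pick G); apply: eq_bigr => u _.
suff -> : (t * u == v) = (u == t^-1 * v) by [].
apply/eqP/eqP => [<-|->]; first by rewrite mulKf.
by rewrite mulVKf.
Qed.

Lemma convC f g : conv f g =1 conv g f.
Proof.
move=> z; rewrite /conv exchange_big; apply: eq_bigr => x _; apply: eq_bigr => y _.
by rewrite [y * x]mulrC [f y * _]mulrC.
Qed.

Lemma conv_tripleL f g h z : conv (conv f g) h z =
  \sum_x \sum_y \sum_w ((x * y * w == z)%:R * (f x * g y * h w)).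
Proof.
rewrite /conv.
transitivity (\sum_v \sum_w \sum_x \sum_y ((v == x * y)%:R * ((v * w == z)%:R * (f x * g y * h w)))).
  apply: eq_bigr => v _; apply: eq_bigr => w _.
  rewrite mulr_suml mulr_sumr; apply: eq_bigr => x _.
  rewrite mulr_suml mulr_sumr; apply: eq_bigr => y _.
  by rewrite (eq_sym (x * y)); ring.
rewrite exchange_big; under eq_bigr => w _ do rewrite exchange_big.
rewrite exchange_big; apply: eq_bigr => x _.
under eq_bigr => w _ do rewrite exchange_big.
rewrite exchange_big; apply: eq_bigr => y _.
apply: eq_bigr => w _.
by rewrite (sum_pick (fun v => (v * w == z)%:R * (f x * g y * h w))).
Qed.

Lemma conv_tripleR f g h z : conv f (conv g h) z =
  \sum_x \sum_y \sum_w ((x * y * w == z)%:R * (f x * g y * h w)).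
Proof.
rewrite /conv; apply: eq_bigr => x _.
transitivity (\sum_v \sum_y \sum_w ((v == y * w)%:R * ((x * v == z)%:R * (f x * g y * h w)))).
  apply: eq_bigr => v _.
  rewrite mulr_sumr mulr_sumr; apply: eq_bigr => y _.
  rewrite mulr_sumr mulr_sumr; apply: eq_bigr => w _.
  by rewrite (eq_sym (y * w)); ring.
rewrite exchange_big; apply: eq_bigr => y _.
rewrite exchange_big; apply: eq_bigr => w _.
by rewrite (sum_pick (fun v => (x * v == z)%:R * (f x * g y * h w))) [x * (y * w)]mulrA.
Qed.

Lemma convA f g h : conv (conv f g) h =1 conv f (conv g h).
Proof. by move=> z; rewrite conv_tripleL conv_tripleR. Qed.

Lemma conv_eq_l f1 f2 g : f1 =1 f2 -> conv f1 g =1 conv f2 g.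
Proof. by move=> e z; apply: eq_bigr => x _; rewrite e. Qed.

Lemma conv_eq_r f g1 g2 : g1 =1 g2 -> conv f g1 =1 conv f g2.
Proof. by move=> e z; apply: eq_bigr => x _; apply: eq_bigr => y _; rewrite e. Qed.

Lemma conv_expandL f g z : conv f g z = \sum_x f x * \sum_y ((x * y == z)%:R * g y).
Proof.
apply: eq_bigr => x _; rewrite mulr_sumr; apply: eq_bigr => y _; ring.
Qed.

Lemma conv_delta c f z : c != 0 -> conv (fun x => (x == c)%:R) f z = f (c^-1 * z).
Proof.
move=> c0; rewrite conv_expandL.
rewrite (sum_pick (fun x => \sum_y ((x * y == z)%:R * f y))).
exact: sum_mul_eq.
Qed.

Lemma conv_eqnz_l f1 f2 g : eqnz f1 f2 -> eqnz (conv f1 g) (conv f2 g).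
Proof.
move=> e z z0; apply: eq_bigr => x _; apply: eq_bigr => y _.
have [xyz|] := eqVneq (x * y) z; last by move=> _; rewrite !mul0r.
by move: z0; rewrite -xyz mulf_eq0 => /norP[x0 y0]; rewrite e.
Qed.

Lemma conv_eqnz_r f g1 g2 : eqnz g1 g2 -> eqnz (conv f g1) (conv f g2).
Proof.
move=> e z z0; apply: eq_bigr => x _; apply: eq_bigr => y _.
have [xyz|] := eqVneq (x * y) z; last by move=> _; rewrite !mul0r.
by move: z0; rewrite -xyz mulf_eq0 => /norP[x0 y0]; rewrite e.
Qed.

Lemma conv_lin_r f g1 g2 (k1 k2 : C) :
  conv f (fun y => k1 * g1 y + k2 * g2 y) =1 (fun z => k1 * conv f g1 z + k2 * conv f g2 z).
Proof.
move=> z; rewrite /conv !mulr_sumr -big_split; apply: eq_bigr => x _.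
rewrite !mulr_sumr -big_split; apply: eq_bigr => y _ /=; ring.
Qed.

Lemma conv_lin_l f1 f2 g (k1 k2 : C) :
  conv (fun y => k1 * f1 y + k2 * f2 y) g =1 (fun z => k1 * conv f1 g z + k2 * conv f2 g z).
Proof.
move=> z; rewrite convC conv_lin_r /= !(convC g) //.
Qed.

Lemma conv_scale_r f g (k : C) : conv f (fun y => k * g y) =1 (fun z => k * conv f g z).
Proof.
move=> z; rewrite /conv !mulr_sumr; apply: eq_bigr => x _.
rewrite !mulr_sumr; apply: eq_bigr => y _ /=; ring.
Qed.

Lemma conv_scale_l f g (k : C) : conv (fun y => k * f y) g =1 (fun z => k * conv f g z).
Proof. by move=> z; rewrite convC conv_scale_r /= convC. Qed.

Lemma conv_delta1 f : conv (fun x => (x == 1)%:R) f =1 f.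
Proof. by move=> z; rewrite conv_delta ?oner_eq0 // invr1 mul1r. Qed.

Lemma conv0r f : conv f (fun _ => 0) =1 (fun _ => 0).
Proof. by move=> z; rewrite /conv big1 // => x _; rewrite big1 // => y _; rewrite !mulr0. Qed.

Definition aug f := \sum_(z | z != 0) f z.

Lemma aug_conv f g : aug (conv f g) = aug f * aug g.
Proof.
rewrite /aug /conv exchange_big /= [\sum_(z | z != 0) f z]big_mkcond mulr_suml; apply: eq_bigr => x _.
rewrite exchange_big /= mulr_sumr [\sum_(z | z != 0) _]big_mkcond /=; apply: eq_bigr => y _.
rewrite big_mkcond (bigD1 (x * y)) //= eqxx mul1r big1 ?addr0; last first.
  by move=> w /negbTE; rewrite eq_sym => ->; case: (w != 0); rewrite ?mul0r.
rewrite mulf_eq0; case: (x == 0); case: (y == 0) => /=; ring.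
Qed.

Lemma aug_eq f g : f =1 g -> aug f = aug g.
Proof. by move=> e; apply: eq_bigr => z _. Qed.

Lemma aug_eqnz f g : eqnz f g -> aug f = aug g.
Proof. by move=> e; apply: eq_bigr => z z0; apply: e. Qed.

End Conv.

Section Push.
Variables (F L : finFieldType) (C : numClosedFieldType) (N : L -> F).
Hypotheses (NM : forall x y, N (x * y) = N x * N y) (N1 : N 1 = 1)
  (N0 : forall x, (N x == 0) = (x == 0)).
Implicit Types (G H : L -> C).

Definition push G (y : F) : C := \sum_t ((N t == y)%:R * G t).

Lemma push_conv G H : conv (push G) (push H) =1 push (conv G H).
Proof.
move=> w.
transitivity (\sum_t \sum_u ((N t * N u == w)%:R * (G t * H u))).
  rewrite /conv /push.
  transitivity (\sum_y \sum_z \sum_t \sum_u ((N t == y)%:R * ((N u == z)%:R *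
     ((y * z == w)%:R * (G t * H u))))).
    apply: eq_bigr => y _; apply: eq_bigr => z _.
    rewrite mulr_suml mulr_sumr; apply: eq_bigr => t _.
    rewrite mulr_sumr mulr_sumr; apply: eq_bigr => u _; ring.
  rewrite exchange_big; under eq_bigr => z _ do rewrite exchange_big.
  rewrite exchange_big; apply: eq_bigr => t _.
  under eq_bigr => z _ do rewrite exchange_big.
  rewrite exchange_big; apply: eq_bigr => u _.
  under eq_bigr => z _ do rewrite sum_pick'.
  by rewrite sum_pick'.
rewrite /push /conv.
transitivity (\sum_v \sum_t \sum_u ((v == t * u)%:R * ((N v == w)%:R * (G t * H u)))).
  apply: esym; rewrite exchange_big; apply: eq_bigr => t _.
  rewrite exchange_big; apply: eq_bigr => u _.
  by rewrite (sum_pick (fun v => (N v == w)%:R * (G t * H u))) NM.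
apply: eq_bigr => v _; rewrite mulr_sumr; apply: eq_bigr => t _.
rewrite mulr_sumr; apply: eq_bigr => u _; rewrite eq_sym; ring.
Qed.

Lemma push_eqnz G H : (forall v, v != 0 -> G v = H v) -> eqnz (push G) (push H).
Proof.
move=> e y y0; apply: eq_bigr => t _.
have [Nty|] := eqVneq (N t) y; last by rewrite !mul0r.
by rewrite e // -N0 Nty.
Qed.

Lemma push_lin G H (k1 k2 : C) :
  push (fun t => k1 * G t + k2 * H t) =1 (fun y => k1 * push G y + k2 * push H y).
Proof.
move=> y; rewrite /push !mulr_sumr -big_split; apply: eq_bigr => t _ /=; ring.
Qed.

Lemma push_scale G (k : C) : push (fun t => k * G t) =1 (fun y => k * push G y).
Proof. move=> y; rewrite /push !mulr_sumr; apply: eq_bigr => t _ /=; ring. Qed.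

Lemma push_delta1 : push (fun t => (t == 1)%:R) =1 (fun y => (y == 1)%:R).
Proof.
move=> y; rewrite /push (eq_bigr (fun t => (t == 1)%:R * (N t == y)%:R)).
  by rewrite (sum_pick (fun t => (N t == y)%:R)) N1 eq_sym.
by move=> t _; rewrite mulrC.
Qed.

Lemma aug_push G : aug (push G) = \sum_(t | t != 0) G t.
Proof.
rewrite /aug /push exchange_big /= [RHS]big_mkcond; apply: eq_bigr => t _.
rewrite big_mkcond (bigD1 (N t)) //= eqxx mul1r big1 ?addr0; last first.
  by move=> w /negbTE; rewrite eq_sym => ->; case: (w != 0); rewrite ?mul0r.
by rewrite N0.
Qed.

End Push.

Section Cancel.
Variables (F L : finFieldType) (C : numClosedFieldType) (N : L -> F) (T : L -> F) (psi : F -> C).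
Hypotheses (NM : forall x y, N (x * y) = N x * N y) (N1 : N 1 = 1)
  (N0 : forall x, (N x == 0) = (x == 0)).
Hypotheses (psiD : forall x y, psi (x + y) = psi x * psi y) (psi_neq0 : forall x, psi x != 0).
Hypothesis TD : {morph T : x y / x + y}.
Hypothesis Tnt : exists x0, psi (T x0) != 1.

Lemma psi0 : psi 0 = 1.
Proof.
have := psiD 0 0; rewrite addr0 => /(congr1 (fun z => z / psi 0)).
by rewrite divff ?psi_neq0 // mulfK ?psi_neq0.
Qed.

Lemma T0 : T 0 = 0.
Proof. by apply: (addrI (T 0)); rewrite -TD !addr0. Qed.

Lemma psiT_sub x y : psi (T x) * psi (- T y) = psi (T (x - y)).
Proof.
have TN : T (- y) = - T y.
  by apply: (addrI (T y)); rewrite -TD !addrN T0.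
by rewrite -psiD TD TN.
Qed.

Lemma sum_psiT : \sum_t psi (T t) = 0.
Proof.
have [x0 nx0] := Tnt.
have : \sum_t psi (T t) = psi (T x0) * \sum_t psi (T t).
  rewrite mulr_sumr (reindex_inj (addIr x0)) /=.
  by apply: eq_bigr => t _; rewrite TD psiD mulrC.
move/eqP; rewrite -{1}[\sum_t _]mul1r -subr_eq0 -mulrBl mulf_eq0 subr_eq0 eq_sym.
by rewrite (negbTE nx0) => /eqP.
Qed.

Lemma sum_psiT_mul w : w != 0 -> \sum_t psi (T (w * t)) = 0.
Proof.
move=> w0; transitivity (\sum_t psi (T t)); last exact: sum_psiT.
by rewrite [RHS](reindex_inj (mulfI w0)).
Qed.

Lemma sum_nz (G : L -> C) : \sum_(t | t != 0) G t = \sum_t G t - G 0.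
Proof. rewrite [X in _ = X - _](bigD1 0) //=; ring. Qed.

Local Notation Q := (#|L|%:R : C).
Definition gfun := fun t => psi (T t).
Definition hfun := fun u : L => psi (- T u^-1).
Definition nzfun := fun t : L => ((t != 0)%:R : C).

Lemma conv_gh v : v != 0 ->
  conv gfun hfun v = Q * (v == 1)%:R + (-1) * nzfun v.
Proof.
move=> v0; rewrite conv_expandL.
transitivity (\sum_(x | x != 0) psi (T ((1 - v^-1) * x))).
  rewrite [RHS]big_mkcond; apply: eq_bigr => x _.
  have [->|x0] := eqVneq x 0.
    by rewrite big1 ?mulr0 // => y _; rewrite mul0r eq_sym (negbTE v0) mul0r.
  rewrite sum_mul_eq //= /gfun /hfun psiT_sub invfM invrK mulrC; congr (psi (T _)).
  by rewrite mulrBl mul1r.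
rewrite sum_nz mulr0 T0 psi0 /nzfun v0 /=.
have [->|v1] := eqVneq v 1.
  rewrite invr1 subrr (eq_bigr (fun _ => 1)); last by move=> t _; rewrite mul0r T0 psi0.
  by rewrite sumr_const cardT -cardE /= mulr1 mulN1r.
rewrite sum_psiT_mul; first by rewrite /= mulr0 add0r mulN1r sub0r.
by rewrite subr_eq0 eq_sym invr_eq1.
Qed.

Lemma conv_nn v : v != 0 -> conv nzfun nzfun v = (Q - 1) * nzfun v.
Proof.
move=> v0; rewrite conv_expandL /nzfun v0 mulr1.
transitivity (\sum_(x : L | x != 0) (1 : C)).
  rewrite [RHS]big_mkcond; apply: eq_bigr => x _.
  have [->|x0] := eqVneq x 0; first by rewrite /= mul0r.
  by rewrite sum_mul_eq //= mulf_neq0 ?invr_eq0 // mul1r.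
by rewrite sum_nz sumr_const cardT -cardE /=.
Qed.

Definition gL := push N gfun.
Definition hL := push N hfun.
Definition nL := push N nzfun.

Lemma Q_neq0 : Q != 0.
Proof. by rewrite pnatr_eq0 -lt0n; apply/card_gt0P; exists 0. Qed.

Lemma hg_eq : eqnz (conv gL hL) (fun y => Q * (y == 1)%:R + (-1) * nL y).
Proof.
move=> y y0; rewrite /gL /hL push_conv //.
transitivity (push N (fun v => Q * (v == 1)%:R + (-1) * nzfun v) y).
  by apply: (push_eqnz N0) => // v v0; exact: conv_gh.
by rewrite push_lin push_delta1.
Qed.

Lemma nn_eq : eqnz (conv nL nL) (fun y => (Q - 1) * nL y).
Proof.
move=> y y0; rewrite /nL push_conv //.
transitivity (push N (fun v => (Q - 1) * nzfun v) y).
  by apply: (push_eqnz N0) => // v v0; exact: conv_nn.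
by rewrite push_scale.
Qed.

Lemma cancel_gL (u : F -> C) : eqnz (conv gL u) (fun _ => 0) -> eqnz u (fun _ => 0).
Proof.
move=> H.
have E1 : forall z, z != 0 -> Q * u z = conv nL u z.
  move=> z z0.
  have e := conv_eqnz_r hL H z0; rewrite conv0r -convA in e.
  have e2 : conv (conv gL hL) u z = 0.
    by rewrite -e; apply: conv_eq_l => y; apply: convC.
  have e3 : conv (fun y => Q * (y == 1)%:R + (-1) * nL y) u z = 0.
    by rewrite -e2; symmetry; apply: (conv_eqnz_l u hg_eq z0).
  rewrite conv_lin_l conv_delta1 in e3.
  by move/eqP: e3; rewrite mulN1r subr_eq0 => /eqP.
have E2 : forall z, z != 0 -> conv nL u z = 0.
  move=> z z0.
  have e1 : conv nL (fun z => Q * u z) z = conv nL (conv nL u) z := conv_eqnz_r nL E1 z0.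
  rewrite conv_scale_r -convA in e1.
  have e2 : conv (conv nL nL) u z = (Q - 1) * conv nL u z.
    by rewrite (conv_eqnz_l u nn_eq z0) conv_scale_l.
  move: e1; rewrite e2 => /eqP; rewrite -subr_eq0 -mulrBl.
  rewrite opprB addrC subrK mulf_eq0 oner_eq0 /=.
  by move/eqP.
move=> z z0; have := E1 z z0; rewrite E2 // => /eqP; rewrite mulf_eq0 (negbTE Q_neq0) /=.
by move/eqP.
Qed.

Lemma aug_gL : aug gL = -1.
Proof. by rewrite /gL aug_push // sum_nz /gfun sum_psiT T0 psi0 sub0r. Qed.

End Cancel.


Definition fcons (T : finType) n (x : T) (g : {ffun 'I_n -> T}) : {ffun 'I_n.+1 -> T} :=
  [ffun i => if unlift ord0 i is Some j then g j else x].

Lemma fcons0 (T : finType) n x (g : {ffun 'I_n -> T}) : fcons x g ord0 = x.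
Proof. by rewrite ffunE unlift_none. Qed.

Lemma fconsS (T : finType) n x (g : {ffun 'I_n -> T}) j : fcons x g (lift ord0 j) = g j.
Proof. by rewrite ffunE liftK. Qed.

Lemma sum_ffunS (T : finType) (R : nmodType) n (Phi : {ffun 'I_n.+1 -> T} -> R) :
  \sum_f Phi f = \sum_x \sum_(g : {ffun 'I_n -> T}) Phi (fcons x g).
Proof.
rewrite pair_big /=.
pose h (p : T * {ffun 'I_n -> T}) := fcons p.1 p.2.
pose h' (f : {ffun 'I_n.+1 -> T}) := (f ord0, [ffun j => f (lift ord0 j)]).
have hK : cancel h h'.
  by case=> x g; rewrite /h /h' fcons0; congr pair; apply/ffunP => j; rewrite ffunE fconsS.
have hK' : cancel h' h.
  move=> f; apply/ffunP => i; rewrite /h /h' ffunE /=.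
  by case: unliftP => [j ->|->]; rewrite ?ffunE.
by rewrite (reindex h) //; exists h' => p _; [apply: hK | apply: hK'].
Qed.

Lemma conv_push_l (F L : finFieldType) (C : numClosedFieldType) (N : L -> F) G (K : F -> C) z :
  conv (push N G) K z = \sum_x G x * \sum_w ((N x * w == z)%:R * K w).
Proof.
rewrite conv_expandL /push.
under eq_bigr => y _ do rewrite mulr_suml.
rewrite exchange_big; apply: eq_bigr => x _.
rewrite (eq_bigr (fun y => (N x == y)%:R * (G x * \sum_w ((y * w == z)%:R * K w)))).
  by rewrite sum_pick'.
by move=> y _; rewrite mulrA.
Qed.

Lemma collapse (F : finFieldType) (C : numClosedFieldType) (I J : finType)
  (P : I -> J -> F) (W : I -> J -> C) (c z : F) :
  \sum_w ((c * w == z)%:R * \sum_g \sum_s ((P g s == w)%:R * W g s)) =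
  \sum_g \sum_s ((c * P g s == z)%:R * W g s).
Proof.
under eq_bigr => w _ do rewrite mulr_sumr.
rewrite exchange_big; apply: eq_bigr => g _.
under eq_bigr => w _ do rewrite mulr_sumr.
rewrite exchange_big; apply: eq_bigr => s _.
rewrite (eq_bigr (fun w => (P g s == w)%:R * ((c * w == z)%:R * W g s))).
  by rewrite sum_pick'.
by move=> w _; ring.
Qed.

Section KlRec.
Variables (F E : finFieldType) (iota : {rmorphism F -> E}) (C : numClosedFieldType) (psi : F -> C).
Hypotheses (psiD : forall x y, psi (x + y) = psi x * psi y) (psi_neq0 : forall x, psi x != 0).
Hypothesis TrD : {morph Tr iota : x y / x + y}.

Local Notation Tr := (Tr iota).
Local Notation Nr := (Nr iota).

Lemma Tr0 : Tr 0 = 0.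
Proof. by apply: (addrI (Tr 0)); rewrite -TrD !addr0. Qed.

Lemma KlE n m a : Kl iota n m psi a =
  \sum_(t : {ffun 'I_n -> E}) \sum_(s : {ffun 'I_m -> F})
    (((\prod_i Nr (t i)) * (\prod_j s j) == a)%:R *
     ((\prod_i psi (Tr (t i))) * \prod_j psi (s j))).
Proof.
rewrite /Kl; apply: eq_bigr => t _; rewrite big_mkcond; apply: eq_bigr => s _.
rewrite (big_morph Tr TrD Tr0) (big_morph psi psiD (psi0 psiD psi_neq0)).
rewrite (big_morph psi psiD (psi0 psiD psi_neq0)).
by case: (_ == _); rewrite ?mul1r ?mul0r.
Qed.

Lemma Kl_recn n m a : Kl iota n.+1 m psi a =
  conv (push Nr (fun t => psi (Tr t))) (Kl iota n m psi) a.
Proof.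
rewrite conv_push_l.
under eq_bigr => x _ do under eq_bigr => w _ do rewrite KlE.
under eq_bigr => x _ do rewrite collapse.
rewrite KlE sum_ffunS; apply: eq_bigr => x _.
rewrite mulr_sumr; apply: eq_bigr => g _.
rewrite mulr_sumr; apply: eq_bigr => s _.
rewrite !big_ord_recl fcons0.
have e1 : \prod_(i < n) Nr (fcons x g (lift ord0 i)) = \prod_i Nr (g i).
  by apply: eq_bigr => i _; rewrite fconsS.
have e2 : \prod_(i < n) psi (Tr (fcons x g (lift ord0 i))) = \prod_i psi (Tr (g i)).
  by apply: eq_bigr => i _; rewrite fconsS.
rewrite e1 e2 -[Nr x * _ * _]mulrA; ring.
Qed.

Lemma Kl_recm n m a : Kl iota n m.+1 psi a =
  conv (push (fun x : F => x) psi) (Kl iota n m psi) a.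
Proof.
rewrite conv_push_l.
under eq_bigr => x _ do under eq_bigr => w _ do rewrite KlE.
under eq_bigr => x _ do rewrite collapse.
rewrite KlE.
rewrite exchange_big sum_ffunS; apply: eq_bigr => x _.
rewrite exchange_big mulr_sumr; apply: eq_bigr => g _.
rewrite mulr_sumr; apply: eq_bigr => s _.
rewrite !big_ord_recl fcons0.
have e1 : \prod_(i < m) (fcons x s (lift ord0 i)) = \prod_i s i.
  by apply: eq_bigr => i _; rewrite fconsS.
have e2 : \prod_(i < m) psi (fcons x s (lift ord0 i)) = \prod_i psi (s i).
  by apply: eq_bigr => i _; rewrite fconsS.
rewrite e1 e2 [\prod_i Nr (g i) * _]mulrCA; ring.
Qed.

Definition ffun0' (T : finType) : {ffun 'I_0 -> T} :=
  [ffun i : 'I_0 => False_rect T (Bool.diff_false_true (ltn_ord i))].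

Lemma sum_ffun0 (T : finType) (G : {ffun 'I_0 -> T} -> C) :
  \sum_f G f = G (ffun0' T).
Proof.
rewrite (bigD1 (ffun0' T)) //= big_pred0 ?addr0 // => f.
by apply/negbTE/negPn/eqP/ffunP => -[].
Qed.

Lemma Kl00 z : Kl iota 0 0 psi z = (z == 1)%:R.
Proof. by rewrite KlE !sum_ffun0 !big_ord0 !mulr1 eq_sym. Qed.

End KlRec.


Section FieldFacts.
Variables (F E : finFieldType) (iota : {rmorphism F -> E}).

Definition closedS (S : {set E}) :=
  [/\ 0 \in S, (forall x y, x \in S -> y \in S -> x + y \in S) &
      (forall a x, x \in S -> iota a * x \in S)].

Lemma closed_sub S x y : closedS S -> x \in S -> y \in S -> y - x \in S.
Proof.
case=> _ SD SZ xS yS; apply: SD => //.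
by rewrite -mulN1r -(rmorph1 iota) -rmorphN; apply: SZ.
Qed.

Lemma card_pow_aux n : forall S : {set E}, (#|~: S| <= n)%N -> closedS S ->
  (exists k, #|S| = (#|F| ^ k)%N) -> exists k, #|E| = (#|F| ^ k)%N.
Proof.
elim: n => [|n IH] S.
  rewrite leqn0 cards_eq0 => /eqP eC _ [k Sk].
  by exists k; rewrite -Sk -cardsT -setC0 -eC setCK.
move=> cS clS [k Sk].
have [SP|] := eqVneq S setT; first by exists k; rewrite -cardsT -SP.
move=> nST.
have [e _ eS] : exists2 e, e \in [set: E] & e \notin S.
  by apply/subsetPn; apply: contra nST => sub; rewrite eqEsubset subsetT.
pose f (p : E * F) := p.1 + iota p.2 * e.
pose S' := f @: setX S [set: F].
have [S0 SD SZ] := clS.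
have fS x : x \in S -> x \in S'.
  by move=> xS; apply/imsetP; exists (x, 0); rewrite ?inE ?xS //= /f rmorph0 mul0r addr0.
have eS' : e \in S'.
  by apply/imsetP; exists (0, 1); rewrite ?inE ?S0 //= /f rmorph1 mul1r add0r.
apply: (IH S').
- have : ~: S' \proper ~: S.
    apply/properP; split.
      by apply/subsetP => x; rewrite !inE; apply: contra; apply: fS.
    by exists e; rewrite !inE ?eS' ?eS.
  by move/proper_card => lt; rewrite -ltnS; apply: leq_trans lt cS.
- split.
  + by apply: fS.
  + move=> x y /imsetP[[x1 a1] /setXP[x1S _] ->] /imsetP[[y1 b1] /setXP[y1S _] ->].
    rewrite /S'; apply/imsetP; exists (x1 + y1, a1 + b1); first by rewrite !inE SD.
    by rewrite /f /= rmorphD; ring.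
  + move=> c x /imsetP[[x1 a1] /setXP[x1S _] ->].
    rewrite /S'; apply/imsetP; exists (iota c * x1, c * a1); first by rewrite !inE SZ.
    by rewrite /f /= rmorphM; ring.
- exists k.+1; rewrite card_in_imset ?cardsX ?cardsT ?Sk ?expnS 1?mulnC //.
  move=> [x1 a1] [y1 b1] /setXP[x1S _] /setXP[y1S _]; rewrite /f /= => eq.
  have [ab|nab] := eqVneq a1 b1.
    by move: eq; rewrite ab => /addIr ->.
  exfalso; move/negP: eS; apply.
  have -> : e = iota ((a1 - b1)^-1) * (y1 - x1).
    have nz : iota (a1 - b1) != 0 by rewrite fmorph_eq0 subr_eq0.
    apply: (mulfI nz); rewrite fmorphV mulrA divff // mul1r rmorphB.
    have eq' : y1 = x1 + iota a1 * e - iota b1 * e by rewrite eq addrK.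
    by rewrite eq'; ring.
  by apply: SZ; apply: closed_sub.
Qed.

Lemma card_pow : exists k, #|E| = (#|F| ^ k)%N.
Proof.
apply: (@card_pow_aux #|~: [set (0 : E)]| [set 0]) => //.
  split; first by rewrite inE.
    by move=> x y; rewrite !inE => /eqP -> /eqP ->; rewrite addr0.
  by move=> a x; rewrite !inE => /eqP ->; rewrite mulr0.
by exists 0%N; rewrite cards1.
Qed.


Local Notation q := #|F|.
Local Notation d := (ext_deg F E).

Lemma q_gt1 : (1 < q)%N. Proof. exact: finNzRing_gt1. Qed.

Lemma cardE_deg : #|E| = (q ^ d)%N.
Proof. by rewrite /ext_deg; have [k ->] := card_pow; rewrite trunc_expnK // q_gt1. Qed.

Lemma deg_gt0 : (0 < d)%N.
Proof.
rewrite lt0n; apply/negP => /eqP d0.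
by have := finNzRing_gt1 E; rewrite cardE_deg d0.
Qed.

Lemma expE x : x ^+ (q ^ d) = x :> E.
Proof. by rewrite -cardE_deg expf_card. Qed.

Lemma pnat_q : [pchar E].-nat q.
Proof.
have [p pr pF] := finPcharP F.
have pE : p \in [pchar E] by apply: rmorph_pchar pF.
have -> : q = (p ^ logn p q)%N by exact: (card_pprimeChar pF).
rewrite pnatX; apply/orP; left.
by rewrite pnatE // (pcharf_prime pE).
Qed.

Lemma frob_add i (x y : E) : (x + y) ^+ (q ^ i) = x ^+ (q ^ i) + y ^+ (q ^ i).
Proof. by apply: exprDn_pchar; rewrite pnatX pnat_q. Qed.

Lemma frob_sum i (I : finType) (G : I -> E) :
  (\sum_j G j) ^+ (q ^ i) = \sum_j G j ^+ (q ^ i).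
Proof.
apply: (big_morph (fun z : E => z ^+ (q ^ i))); first by move=> x y; apply: frob_add.
rewrite expr0n; case: eqP => [/eqP|//]; rewrite expn_eq0 => /andP[/eqP q0].
by have := q_gt1; rewrite q0.
Qed.

Lemma expF_q i (a : F) : a ^+ (q ^ i) = a.
Proof. by elim: i => [|i IH]; rewrite ?expr1 // expnSr exprM IH expf_card. Qed.

Lemma fixedF (y : E) : y ^+ q = y -> exists a, y = iota a.
Proof.
move=> yq.
have := congr1 (fun p => (map_poly iota p).[y]) (finField_genPoly F).
rewrite /= rmorphB /= map_polyXn map_polyX rmorph_prod /= !hornerE yq subrr.
rewrite horner_prod => /esym /eqP; rewrite prodf_seq_eq0 => /hasP[a _].
rewrite map_polyXsubC /= hornerXsubC subr_eq0 => /eqP ->; by exists a.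
Qed.

Lemma lowerF_iota a : lowerF iota (iota a) = a.
Proof.
rewrite /lowerF; case: pickP => [x /eqP/fmorph_inj -> //|/(_ a)].
by rewrite eqxx.
Qed.

Lemma deg_S : exists d', d = d'.+1.
Proof. by exists d.-1; rewrite prednK // deg_gt0. Qed.

Lemma trE_iota x : exists a, trE F x = iota a.
Proof.
apply: fixedF; rewrite /trE -(expn1 q) frob_sum.
have [d' dd] := deg_S.
have xe : x ^+ (q ^ d'.+1) = x by rewrite -dd expE.
rewrite dd big_ord_recr big_ord_recl /= -exprM -expnSr xe expn0 expr1 addrC.
congr (_ + _); apply: eq_bigr => i _.
by rewrite -exprM -expnSr.
Qed.

Lemma nrE_iota x : exists a, nrE F x = iota a.
Proof.
apply: fixedF; rewrite /nrE -prodrXl.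
have [d' dd] := deg_S.
have xe : x ^+ (q ^ d'.+1) = x by rewrite -dd expE.
rewrite dd big_ord_recr big_ord_recl /= -exprM -expnSr xe expn0 expr1 mulrC.
congr (_ * _); apply: eq_bigr => i _.
by rewrite -exprM -expnSr.
Qed.

Lemma Tr_iota x : iota (Tr iota x) = trE F x.
Proof. by have [a ea] := trE_iota x; rewrite /Tr ea lowerF_iota. Qed.

Lemma Nr_iota x : iota (Nr iota x) = nrE F x.
Proof. by have [a ea] := nrE_iota x; rewrite /Nr ea lowerF_iota. Qed.

Lemma TrD : {morph Tr iota : x y / x + y}.
Proof.
move=> x y; apply: (fmorph_inj iota); rewrite rmorphD !Tr_iota /trE -big_split /=.
by apply: eq_bigr => i _; rewrite frob_add.
Qed.

Lemma iota_q i a : iota a ^+ (q ^ i) = iota a.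
Proof. by rewrite -rmorphXn expF_q. Qed.

Lemma Tr_scale c x : Tr iota (iota c * x) = c * Tr iota x.
Proof.
apply: (fmorph_inj iota); rewrite rmorphM !Tr_iota /trE mulr_sumr.
by apply: eq_bigr => i _; rewrite exprMn iota_q.
Qed.

Lemma NrM x y : Nr iota (x * y) = Nr iota x * Nr iota y.
Proof.
apply: (fmorph_inj iota); rewrite rmorphM !Nr_iota /nrE -big_split /=.
by apply: eq_bigr => i _; rewrite exprMn.
Qed.

Lemma Nr1 : Nr iota 1 = 1.
Proof.
apply: (fmorph_inj iota); rewrite rmorph1 Nr_iota /nrE big1 // => i _.
by rewrite expr1n.
Qed.

Lemma Nr0 x : (Nr iota x == 0) = (x == 0).
Proof.
rewrite -(fmorph_eq0 iota) Nr_iota /nrE prodf_seq_eq0.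
apply/hasP/idP => [[i _ /=]|x0].
  by rewrite expf_eq0 => /andP[].
exists (Ordinal deg_gt0); first by rewrite mem_index_enum.
by rewrite /= expf_eq0 x0 expn_gt0 (ltnW q_gt1).
Qed.

Lemma Tr_nz : exists x, Tr iota x != 0.
Proof.
have [x0 nz|allz] := pickP (fun x => Tr iota x != 0); first by exists x0.
exfalso.
pose P : {poly E} := \sum_(i < d) 'X^(q ^ i).
have Px x : P.[x] = trE F x.
  by rewrite horner_sum /trE; apply: eq_bigr => i _; rewrite hornerXn.
have d1 := deg_gt0.
have dlt : (d.-1 < d)%N by rewrite ltn_predL.
have P0 : P != 0.
  apply/negP => /eqP P0.
  have := congr1 (fun p : {poly E} => p`_(q ^ d.-1)) P0.
  rewrite coef0 /P coef_sum (bigD1 (Ordinal dlt)) //= coefXn eqxx.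
  rewrite big1 ?addr0; first by move/eqP; rewrite oner_eq0.
  move=> i /eqP ni; rewrite coefXn.
  case: eqP => // /expnI; rewrite q_gt1 => /(_ isT) e.
  by case: ni; apply: val_inj; rewrite /= e.
have szP : (size P <= (q ^ d.-1).+1)%N.
  apply/leq_sizeP => j jl; rewrite /P coef_sum big1 // => i _; rewrite coefXn.
  case: eqP => // ej; move: jl; rewrite ej ltnNge leq_pexp2l ?(ltnW q_gt1) //.
  by rewrite -ltnS prednK.
have := max_poly_roots P0 (rs := enum E).
rewrite enum_uniq -cardE cardE_deg => /(_ _ isT).
have -> : all (root P) (enum E).
  apply/allP => x _; rewrite /root Px -Tr_iota.
  by have /negbFE/eqP -> := allz x; rewrite rmorph0.
move=> /(_ isT) lt; have := leq_trans lt szP.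
have e : (q ^ d = q * q ^ d.-1)%N by rewrite -expnS prednK.
have u0 : (0 < q ^ d.-1)%N by rewrite expn_gt0 (ltnW q_gt1).
have := q_gt1; rewrite e; move: (q ^ d.-1)%N u0 => u u0 q1 h.
nia.
Qed.

End FieldFacts.


Section Step.
Variables (F L : finFieldType) (C : numClosedFieldType) (N : L -> F) (T : L -> F) (psi : F -> C).
Hypotheses (NM : forall x y, N (x * y) = N x * N y) (N1 : N 1 = 1)
  (N0 : forall x, (N x == 0) = (x == 0)).
Hypotheses (psiD : forall x y, psi (x + y) = psi x * psi y) (psi_neq0 : forall x, psi x != 0).
Hypothesis TD : {morph T : x y / x + y}.
Hypothesis Tnt : exists x0, psi (T x0) != 1.
Variables (a b : F).
Hypotheses (a0 : a != 0) (b0 : b != 0).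

Definition Pinv (f : F -> C) := forall z, z != 0 -> f (a^-1 * z) = f (b^-1 * z).

Lemma Pinv_step (u : F -> C) : Pinv (conv (gL N T psi) u) -> Pinv u.
Proof.
move=> H.
have sw c : c != 0 -> forall z, conv (gL N T psi) u (c^-1 * z) =
    conv (gL N T psi) (conv (fun x => (x == c)%:R) u) z.
  move=> c0 z; rewrite -conv_delta // -convA.
  rewrite (conv_eq_l _ (convC _ _)) convA //.
have : eqnz (conv (gL N T psi) (fun z => 1 * conv (fun x => (x == a)%:R) u z +
        (-1) * conv (fun x => (x == b)%:R) u z)) (fun _ => 0).
  move=> z z0; rewrite conv_lin_r -!sw // H //; ring.
move/(cancel_gL NM N1 N0 psiD psi_neq0 TD Tnt) => e z z0.
have := e z z0; rewrite /= !conv_delta // => /eqP.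
by rewrite mul1r mulN1r subr_eq0 => /eqP.
Qed.

End Step.

Unset Implicit Arguments.
Set Strict Implicit.

Theorem propositionA7 (F E : finFieldType) (iota : {rmorphism F -> E})
  (C : numClosedFieldType) (psi : F -> C) (n m : nat) (a b : F) (c : C) :
  add_char psi -> nontrivial_char psi ->
  a != 0 -> b != 0 -> c != 0 ->
  (forall t : F, t != 0 ->
     Kl iota n m psi (t * a) = c * Kl iota n m psi (t * b)) ->
  c = 1 /\ a = b.
Proof.
move=> [psiD psi_neq0] [s0 ns0] a0 b0 c0 H.
have TrDi := TrD iota.
have TntE : exists x0, psi (Tr iota x0) != 1.
  have [x0 nx0] := Tr_nz iota.
  by exists (iota (s0 / Tr iota x0) * x0); rewrite Tr_scale divfK.
have TntF : exists x0 : F, psi ((fun x => x) x0) != 1 by exists s0.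
have NMF : forall x y : F, (fun x => x) (x * y) = (fun x => x) x * (fun x => x) y by [].
have N1F : (fun x : F => x) 1 = 1 by [].
have N0F : forall x : F, ((fun x => x) x == 0) = (x == 0) by [].
have TDF : {morph (fun x : F => x) : x y / x + y} by [].
have augF : aug (push (fun x : F => x) psi) = -1 := aug_gL N0F psiD psi_neq0 TDF TntF.
have augE : aug (push (Nr iota) (fun t => psi (Tr iota t))) = -1 :=
  aug_gL (Nr0 iota) psiD psi_neq0 TrDi TntE.
have augK : forall n m, aug (Kl iota n m psi) = (-1) ^+ (n + m).
  elim=> [|n' IHn] m'.
    elim: m' => [|m' IHm].
      rewrite (aug_eq (Kl00 psiD psi_neq0 TrDi)) /aug (bigD1 1) ?oner_neq0 //= eqxx.
      by rewrite big1 ?addr0 // => z /andP[_ /negbTE ->].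
    by rewrite (aug_eq (Kl_recm psiD psi_neq0 TrDi 0 m')) aug_conv augF IHm add0n exprS mulN1r.
  by rewrite (aug_eq (Kl_recn psiD psi_neq0 TrDi n' m')) aug_conv augE IHn addSn exprS mulN1r.
have reidx : forall (f : F -> C) (x : F), x != 0 ->
    \sum_(t | t != 0) f (t * x) = aug f.
  move=> f x x0; rewrite /aug [RHS](reindex_inj (mulIf x0)) /=.
  by apply: eq_bigl => t; rewrite mulf_eq0 (negbTE x0) orbF.
have augnz : aug (Kl iota n m psi) != 0 by rewrite augK signr_eq0.
have c1 : c = 1.
  have : aug (Kl iota n m psi) = c * aug (Kl iota n m psi).
    rewrite -{1}(reidx _ a a0) -(reidx _ b b0) mulr_sumr.
    by apply: eq_bigr => t t0; rewrite H.
  move/eqP; rewrite -{1}[aug _]mul1r -subr_eq0 -mulrBl mulf_eq0 (negbTE augnz) orbF.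
  by rewrite subr_eq0 eq_sym => /eqP.
split=> //.
have P : Pinv a b (Kl iota n m psi).
  move=> z z0.
  have t0 : a^-1 * b^-1 * z != 0 by rewrite !mulf_neq0 ?invr_eq0.
  have := H _ t0; rewrite c1 mul1r.
  have -> : a^-1 * b^-1 * z * a = b^-1 * z by rewrite mulrC -!mulrA mulVKf.
  by have -> : a^-1 * b^-1 * z * b = a^-1 * z by rewrite mulrC -!mulrA mulrCA mulVKf.
have P0 : forall n m, Pinv a b (Kl iota n m psi) -> Pinv a b (Kl iota 0 0 psi).
  elim=> [|n' IHn] m'.
    elim: m' => [//|m' IHm] Pm; apply: IHm.
    apply: (Pinv_step NMF N1F N0F psiD psi_neq0 TDF TntF a0 b0).
    by move=> z z0; rewrite -!(Kl_recm psiD psi_neq0 TrDi); apply: Pm.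
  move=> Pn; apply: (IHn m').
  apply: (Pinv_step (NrM iota) (Nr1 iota) (Nr0 iota) psiD psi_neq0 TrDi TntE a0 b0).
  by move=> z z0; rewrite -!(Kl_recn psiD psi_neq0 TrDi); apply: Pn.
have := P0 n m P a a0; rewrite !(Kl00 psiD psi_neq0 TrDi) mulVf // eqxx.
case: eqP => [ba _|_ /eqP]; last by rewrite eqr_nat.
by rewrite -[a](mulVKf b0) ba mulr1.
Qed.
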